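(* Let $X$ be a CRSM on $E$ with extremal coefficient functional $\theta$. Then for all $K_1,K_2\in\mathcal K$ and $\varepsilon>0$, $$\mathbb P\{X(K_1)-X(K_2)\le\varepsilon\}\ge\exp\Big\{-\frac1\varepsilon\big(\theta(K_1\cup K_2)-\theta(K_2)\big)\Big\},$$ and consequently $$\mathbb P\{|X(K_1)-X(K_2)|>\varepsilon\}\le\frac1\varepsilon\big(2\theta(K_1\cup K_2)-\theta(K_1)-\theta(K_2)\big).$$
   Context: $E$ is a locally compact Hausdorff second countable space; $\mathcal K$ its compact subsets. A sup-measure on $E$ is a Choquet capacity $\varphi$ (non-decreasing, $\varphi(\emptyset)=0$, $\varphi(A_n)\uparrow\varphi(A)$ if $A_n\uparrow A$, $\varphi(K_n)\downarrow\varphi(K)$ for compact $K_n\downarrow K$), finite on compacts, with $\varphi(\bigcup_j G_j)=\sup_j\varphi(G_j)$ for all families of open sets; a random sup-measure is a random element of the space of sup-measures (Borel $\sigma$-algebra of the sup-vague topology). $\mathrm{USC}$: bounded non-negative upper semicontinuous functions with relatively compact support. Extremal integral $\int^e f\,d\varphi=\sup\{\varphi(K)\inf_{x\in K}f(x):K\in\mathcal K\}$. Unit Fréchet with scale $a\ge0$: distribution function $\exp(-a/t)$, $t>0$. $X$ is max-stable if $\bigvee_iu_iX(K_i)$ is unit Fréchet for all $K_i\in\mathcal K$, $u_i\ge0$; tail dependence functional $\ell(f)$ = scale of $\int^e f\,dX$; extremal coefficient functional $\theta(K)=\ell(\mathbf 1_K)$. $X$ is a CRSM if it is max-stable and $\ell(f+g)=\ell(f)+\ell(g)$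 for all $f,g\in\mathrm{USC}$ with $(f(x)-f(y))(g(x)-g(y))\ge0$ for all $x,y$. *)

(* Defs.v *)
From HB Require Import structures.
From mathcomp Require Import all_boot all_order all_algebra.
From mathcomp Require Import all_classical all_reals all_analysis.
Set Implicit Arguments. Unset Strict Implicit. Unset Printing Implicit Defensive.
Import Order.TTheory GRing.Theory Num.Theory.
Import numFieldNormedType.Exports.
Local Open Scope classical_set_scope.
Local Open Scope ring_scope.

Definition LCHS (E : topologicalType) : Prop :=
  [/\ hausdorff_space E, locally_compact [set: E] & @second_countable E].

Definition sup_measure (R : realType) (E : topologicalType)
    (phi : set E -> \bar R) : Prop :=
  phi set0 = 0%E /\
  [/\ (forall A B : set E, A `<=` B -> (phi A <= phi B)%E),
      (forall A : nat -> set E, (forall n, A n `<=` A n.+1) ->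
          phi \o A @ \oo --> phi (\bigcup_n A n)),
      (forall K : nat -> set E, (forall n, compact (K n)) ->
          (forall n, K n.+1 `<=` K n) ->
          phi \o K @ \oo --> phi (\bigcap_n K n)),
      (forall K : set E, compact K -> phi K \is a fin_num) &
      (forall F : set (set E), F !=set0 -> (forall G, F G -> open G) ->
          phi (\bigcup_(G in F) G) = ereal_sup (phi @` F))].

Definition sup_vague_subbase (R : realType) (E : topologicalType)
    (U : set (set E -> \bar R)) : Prop :=
  (exists K (x : R), compact K /\ U = [set phi | (phi K < x%:E)%E]) \/
  (exists G (x : R), open G /\ U = [set phi | (x%:E < phi G)%E]).

(* A random sup-measure: each realisation is a sup-measure, and X is
   measurable for the Borel sigma-algebra of the sup-vague topology
   (generated by the subbase above, since that topology is second countable). *)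
Definition random_sup_measure (R : realType) (E : topologicalType)
    (d : measure_display) (Omega : measurableType d)
    (X : Omega -> set E -> \bar R) : Prop :=
  (forall w, sup_measure (X w)) /\
  (forall U, sup_vague_subbase U -> measurable (X @^-1` U)).

Definition frechet (R : realType) (d : measure_display) (Omega : measurableType d)
    (P : probability Omega R) (Y : Omega -> \bar R) (a : R) : Prop :=
  0 <= a /\ forall t : R, 0 < t ->
    measurable [set w | (Y w <= t%:E)%E] /\
    P [set w | (Y w <= t%:E)%E] = (expR (- (a / t)))%:E.

Definition max_stable (R : realType) (E : topologicalType)
    (d : measure_display) (Omega : measurableType d)
    (P : probability Omega R) (X : Omega -> set E -> \bar R) : Prop :=
  forall (n : nat) (K : 'I_n -> set E) (u : 'I_n -> R),
    (forall i, compact (K i)) -> (forall i, 0 <= u i) ->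
    exists a : R, frechet P
      (fun w => \big[Order.max/0%E]_(i < n) ((u i)%:E * X w (K i))%E) a.

Definition USC (R : realType) (E : topologicalType) (f : E -> R) : Prop :=
  [/\ (forall x, 0 <= f x),
      (exists M : R, forall x, f x <= M),
      (forall t : R, open [set x | f x < t]) &
      compact (closure [set x | f x != 0])].

Definition ext_int (R : realType) (E : topologicalType) (f : E -> R)
    (phi : set E -> \bar R) : \bar R :=
  ereal_sup [set (phi K * (inf (f @` K))%:E)%E | K in [set K : set E | compact K]].

Definition ell (R : realType) (E : topologicalType)
    (d : measure_display) (Omega : measurableType d)
    (P : probability Omega R) (X : Omega -> set E -> \bar R) (f : E -> R) : R :=
  xget 0 [set a | frechet P (fun w => ext_int f (X w)) a].

Definition theta (R : realType) (E : topologicalType)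
    (d : measure_display) (Omega : measurableType d)
    (P : probability Omega R) (X : Omega -> set E -> \bar R) (K : set E) : R :=
  ell P X \1_K.

Definition comonotone (R : realType) (E : Type) (f g : E -> R) : Prop :=
  forall x y, 0 <= (f x - f y) * (g x - g y).

Definition CRSM (R : realType) (E : topologicalType)
    (d : measure_display) (Omega : measurableType d)
    (P : probability Omega R) (X : Omega -> set E -> \bar R) : Prop :=
  [/\ random_sup_measure X, max_stable P X &
      forall f g : E -> R, USC f -> USC g -> comonotone f g ->
        ell P X (f \+ g) = ell P X f + ell P X g].

(* Main.v *)
Require Import Defs.
From HB Require Import structures.
From mathcomp Require Import all_boot all_order all_algebra.
From mathcomp Require Import all_classical all_reals all_analysis.
From mathcomp Require Import measurable_realfun ring lra.
Import Order.TTheory GRing.Theory Num.Theory.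
Import numFieldNormedType.Exports.
Local Open Scope classical_set_scope.
Local Open Scope ring_scope.
Lemma mfunX (R : realType) (d : measure_display) (Omega : measurableType d)
  (Y : Omega -> \bar R) :
  (forall x : R, measurable [set w | (Y w < x%:E)%E]) ->
  measurable_fun setT Y.
Proof.
move=> hY.
have h := @measurability _ _ Omega _ setT Y (@ErealGenInftyO.G R).
apply: h; first exact: (@ErealGenInftyO.measurableE R).
move=> _ [_ [r ->] <-].
rewrite setTI.
have -> : Y @^-1` `]-oo, r%:E[ = [set w | (Y w < r%:E)%E].
  by apply/seteqP; split => w /=; rewrite in_itv /=.
exact: hY.
Qed.

Lemma mfin (R : realType) (d : measure_display) (Omega : measurableType d)
  (Y : Omega -> \bar R) :
  (forall x : R, measurable [set w | (Y w < x%:E)%E]) ->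
  measurable_fun setT (fun w => fine (Y w)).
Proof.
move=> hY; apply: measurableT_comp; last exact: mfunX.
exact: fine_measurable.
Qed.
Lemma ext_int_two (R : realType) (E : topologicalType) (phi : set E -> \bar R)
  (f : E -> R) (K L : set E) (a a' : R) :
  sup_measure phi -> compact K -> compact L -> K `<=` L -> 0 <= a' -> a' <= a ->
  (forall z, K z -> f z = a) -> (forall z, L z -> ~ K z -> f z = a') ->
  (forall z, ~ L z -> f z = 0) ->
  ext_int f phi = maxe (a'%:E * phi L)%E (a%:E * phi K)%E.
Proof.
move=> [phi0 [mono _ _ fin _]] cK cL KL a'0 a'a fK fLK fL.
have a0 : 0 <= a by apply: le_trans a'a.
have ph0 A : (0 <= phi A)%E by rewrite -phi0; apply: mono.
have phE A : compact A -> phi A = (fine (phi A))%:E.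
  by move=> cA; rewrite fineK //; apply: fin.
have fph0 A : 0 <= fine (phi A) by apply: fine_ge0.
have f0 z : 0 <= f z.
  have [Kz|nKz] := pselect (K z); first by rewrite fK.
  have [Lz|nLz] := pselect (L z); first by rewrite fLK.
  by rewrite fL.
have hlb A : has_lbound (f @` A) by exists 0 => _ [z _ <-].
have infle A z : A z -> inf (f @` A) <= f z.
  by move=> Az; apply: ge_inf (hlb A) _ _; exists z.
have M0 : (0 <= maxe (a'%:E * phi L) (a%:E * phi K))%E.
  by rewrite le_max mule_ge0 //= lee_fin.
apply/eqP; rewrite eq_le; apply/andP; split.
  apply: ge_ereal_sup => _ [K' cK' <-].
  rewrite (phE K' cK') -EFinM.
  have [[z [K'z nLz]]|hL] := pselect (exists z, K' z /\ ~ L z).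
    apply: le_trans M0; rewrite lee_fin mulr_ge0_le0 //.
    by rewrite -(fL z nLz); apply: infle.
  have K'L : K' `<=` L.
    by move=> z K'z; apply: contrapT => nL; apply: hL; exists z.
  have [[z [K'z nKz]]|hK] := pselect (exists z, K' z /\ ~ K z).
    rewrite le_max; apply/orP; left.
    rewrite (phE L cL) -EFinM lee_fin mulrC.
    apply: ler_pM => //.
      by apply: lb_le_inf; [exists (f z), z | move=> _ [y _ <-]].
      by rewrite -(fLK z (K'L z K'z) nKz); apply: infle.
    by rewrite fine_le ?fin //; apply: mono.
  have K'K : K' `<=` K.
    by move=> z K'z; apply: contrapT => nK; apply: hK; exists z.
  have [[z K'z]|nK'] := pselect (exists z, K' z); last first.
    have -> : K' = set0 by apply/seteqP; split => // y K'y; apply: nK'; exists y.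
    by rewrite phi0 /= mul0r.
  rewrite le_max; apply/orP; right.
  rewrite (phE K cK) -EFinM lee_fin mulrC.
  apply: ler_pM => //.
    by apply: lb_le_inf; [exists (f z), z | move=> _ [y _ <-]].
    by rewrite -(fK z (K'K z K'z)); apply: infle.
  by rewrite fine_le ?fin //; apply: mono.
rewrite ge_max; apply/andP; split.
  apply: le_trans (ereal_sup_ubound _); last by exists L.
  rewrite (phE L cL) -!EFinM lee_fin mulrC.
  have [[z Lz]|nL] := pselect (exists z, L z); last first.
    have -> : L = set0 by apply/seteqP; split => // y Ly; apply: nL; exists y.
    by rewrite phi0 /= !mul0r.
  apply: ler_wpM2l => //; apply: lb_le_inf; first by exists (f z), z.
  move=> _ [y Ly <-].
  have [Ky|nKy] := pselect (K y); first by rewrite fK.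
  by rewrite fLK.
apply: le_trans (ereal_sup_ubound _); last by exists K.
rewrite (phE K cK) -!EFinM lee_fin mulrC.
have [[z Kz]|nK] := pselect (exists z, K z); last first.
  have -> : K = set0 by apply/seteqP; split => // y Ky; apply: nK; exists y.
  by rewrite phi0 /= !mul0r.
apply: ler_wpM2l => //; apply: lb_le_inf; first by exists (f z), z.
by move=> _ [y Ky <-]; rewrite fK.
Qed.
Lemma frechet_unique (R : realType) (d : measure_display) (Omega : measurableType d)
  (P : probability Omega R) (Y : Omega -> \bar R) a b :
  frechet P Y a -> frechet P Y b -> a = b.
Proof.
move=> [_ ha] [_ hb]; have [_ ea] := ha 1 ltr01; have [_ eb] := hb 1 ltr01.
move: ea; rewrite eb => h; have := expR_inj (EFin_inj h).
by rewrite !divr1 => /oppr_inj.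
Qed.

Lemma frechet_scale (R : realType) (d : measure_display) (Omega : measurableType d)
  (P : probability Omega R) (Y : Omega -> \bar R) a c :
  frechet P Y a -> 0 <= c -> frechet P (fun w => (c%:E * Y w)%E) (c * a).
Proof.
move=> [a0 ha] c0; split; first exact: mulr_ge0.
move=> t t0.
have [->|cpos] := eqVneq c 0.
  have -> : [set w | (0%:E * Y w <= t%:E)%E] = setT.
    by apply/seteqP; split => // w _ /=; rewrite mul0e lee_fin ltW.
  by rewrite probability_setT mul0r mul0r oppr0 expR0.
have c0' : 0 < c by rewrite lt_neqAle eq_sym cpos.
have -> : [set w | (c%:E * Y w <= t%:E)%E] = [set w | (Y w <= (t / c)%:E)%E].
  apply/seteqP; split => w /=.
    have -> : t%:E = (c%:E * (t / c)%:E)%E by rewrite -EFinM mulrC divfK ?gt_eqF.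
    by rewrite lee_pmul2l // lte_fin.
  have -> : t%:E = (c%:E * (t / c)%:E)%E by rewrite -EFinM mulrC divfK ?gt_eqF.
  by rewrite lee_pmul2l // lte_fin.
have [m e] := ha (t / c) (divr_gt0 t0 c0'); split => //; rewrite e.
by congr (expR _)%:E; congr (- _); field; rewrite gt_eqF.
Qed.
Lemma USC_ind (R : realType) (E : topologicalType) (A : set E) (c : R) :
  hausdorff_space E -> compact A -> 0 <= c -> USC (fun z => c * \1_A z).
Proof.
move=> hE cA c0.
have vals z : (c * \1_A z = 0 /\ ~ A z) \/ (c * \1_A z = c /\ A z).
  rewrite indicE; have [Az|nAz] := boolP (z \in A).
    by right; rewrite mulr1; split => //; rewrite -in_setE.
  by left; rewrite mulr0; split => //; move/negP: nAz; rewrite in_setE.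
split.
- by move=> z; have [[-> _]|[-> _]] := vals z.
- by exists c => z; have [[-> _]|[-> _]] := vals z.
- move=> t.
  have [t0|t0] := lerP t 0.
    have -> : [set x | c * \1_A x < t] = set0.
      apply/seteqP; split => // z /=.
      by have [[-> _]|[-> _]] := vals z => h; lra.
    exact: open0.
  have [ct|tc] := ltrP c t.
    have -> : [set x | c * \1_A x < t] = setT.
      apply/seteqP; split => // z _ /=.
      by have [[-> _]|[-> _]] := vals z.
    exact: openT.
  have -> : [set x | c * \1_A x < t] = ~` A.
    apply/seteqP; split => z /=.
      by have [[-> nA]|[-> _]] := vals z => h //; lra.
    by have [[-> _]|[_ Az]] := vals z.
  by apply: closed_openC; apply: compact_closed.
- apply: (subclosed_compact _ cA); first exact: closed_closure.
  have clA : closed A by apply: compact_closed.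
  rewrite [X in _ `<=` X](closure_id A).1 //.
  apply: closure_subset => z /=.
  by have [[-> _]|[_ Az]] := vals z => //; rewrite eqxx.
Qed.

Lemma comon_ind (R : realType) (E : Type) (K L : set E) (c1 c2 : R) :
  K `<=` L -> 0 <= c1 -> 0 <= c2 ->
  comonotone (fun z => c1 * \1_L z) (fun z => c2 * \1_K z).
Proof.
move=> KL c10 c20 x y.
have hKL z : z \in K -> z \in L by rewrite !in_setE; apply: KL.
move: (hKL x) (hKL y); rewrite !indicE.
by case: (x \in K); case: (x \in L); case: (y \in K); case: (y \in L) => //= h1 h2;
  (try by have := h1 erefl); (try by have := h2 erefl); nra.
Qed.

Lemma ell_of (R : realType) (E : topologicalType) (d : measure_display)
  (Omega : measurableType d) (P : probability Omega R)
  (X : Omega -> set E -> \bar R) (f : E -> R) (Y : Omega -> \bar R) a :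
  (forall w, ext_int f (X w) = Y w) -> frechet P Y a -> ell P X f = a.
Proof.
move=> hY fa.
have e : (fun w => ext_int f (X w)) = Y by apply/funext.
rewrite /ell e.
have := @xgetPex _ 0 [set a | frechet P Y a] (ex_intro _ a fa).
by move=> h; apply: frechet_unique h fa.
Qed.

Lemma PU (R : realType) (d : measure_display) (Omega : measurableType d)
  (P : probability Omega R) (A B : set Omega) :
  measurable A -> measurable B -> A `&` B = set0 -> P (A `|` B) = (P A + P B)%E.
Proof. by move=> mA mB AB; rewrite measureU. Qed.

Lemma PD (R : realType) (d : measure_display) (Omega : measurableType d)
  (P : probability Omega R) (A B : set Omega) :
  measurable A -> measurable B -> B `<=` A -> P (A `\` B) = (P A - P B)%E.
Proof.
move=> mA mB BA; rewrite measureD //; first by rewrite setIidr.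
exact: le_lt_trans (probability_le1 P mA) (ltry 1).
Qed.

Lemma Ple (R : realType) (d : measure_display) (Omega : measurableType d)
  (P : probability Omega R) (A B : set Omega) :
  measurable A -> measurable B -> A `<=` B -> (P A <= P B)%E.
Proof. by move=> mA mB AB; apply: le_measure => //; rewrite inE. Qed.

Lemma PU2 (R : realType) (d : measure_display) (Omega : measurableType d)
  (P : probability Omega R) (A B : set Omega) :
  measurable A -> measurable B -> (P (A `|` B) <= P A + P B)%E.
Proof. by move=> mA mB; apply: measureU2. Qed.

Lemma PC (R : realType) (d : measure_display) (Omega : measurableType d)
  (P : probability Omega R) (A : set Omega) :
  measurable A -> P (~` A) = (1 - P A)%E.
Proof. exact: probability_setC. Qed.

Lemma Pfin (R : realType) (d : measure_display) (Omega : measurableType d)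
  (P : probability Omega R) (A : set Omega) :
  measurable A -> P A = (fine (P A))%:E.
Proof.
move=> mA; rewrite fineK // ge0_fin_numE ?measure_ge0 //.
exact: le_lt_trans (probability_le1 P mA) (ltry 1).
Qed.

Lemma part1 (R : realType) (E : topologicalType)
    (d : measure_display) (Omega : measurableType d)
    (P : probability Omega R) (X : Omega -> set E -> \bar R) :
  LCHS E -> CRSM P X ->
  forall (K1 K2 : set E) (eps : R), compact K1 -> compact K2 -> 0 < eps ->
  measurable [set w | (fine (X w K1) - fine (X w K2) <= eps)%R] /\
    ((expR (- (eps^-1 * (theta P X (K1 `|` K2) - theta P X K2))))%R%:E
       <= P [set w | (fine (X w K1) - fine (X w K2) <= eps)%R])%E.
Proof.
move=> [hE _ _] [[hsm hmeas] hms hadd] K1 K2 eps cK1 cK2 eps0.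
have X0 w A : (0 <= X w A)%E.
  have [phi0 [mono _ _ _ _]] := hsm w; rewrite -phi0; exact: mono.
have Xfin w A : compact A -> X w A = (fine (X w A))%:E.
  have [_ [_ _ _ fin _]] := hsm w; by move=> cA; rewrite fineK // fin.
have Xmono w A B : compact A -> compact B -> A `<=` B -> fine (X w A) <= fine (X w B).
  move=> cA cB AB; have [_ [mono _ _ fin _]] := hsm w.
  by rewrite fine_le ?fin // mono.
have mlt A : compact A -> forall x : R, measurable [set w | (X w A < x%:E)%E].
  move=> cA x; apply: (hmeas [set phi | (phi A < x%:E)%E]).
  by left; exists A, x.
have mg A : compact A -> measurable_fun setT (fun w => fine (X w A)).
  by move=> cA; apply: mfin; apply: mlt.
have mle A : compact A -> forall x : R, measurable [set w | (X w A <= x%:E)%E].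
  move=> cA x.
  have := mg A cA measurableT _ (measurable_itv `]-oo, x]); rewrite setTI.
  congr measurable; apply/seteqP; split => w /=; rewrite in_itv /=;
    by rewrite [in X w A](Xfin w A cA) lee_fin.
have ms2 A B u v : compact A -> compact B -> 0 <= u -> 0 <= v ->
    exists a, frechet P (fun w => maxe (u%:E * X w A) (v%:E * X w B))%E a.
  move=> cA cB u0 v0.
  pose Kf := fun i : 'I_2 => if val i == 0%N then A else B.
  pose uf := fun i : 'I_2 => if val i == 0%N then u else v.
  have hK : forall i, compact (Kf i) by move=> i; rewrite /Kf; case: ifP.
  have hu : forall i, 0 <= uf i by move=> i; rewrite /uf; case: ifP.
  have [a fa] := hms 2 Kf uf hK hu.
  exists a; move: fa.
  have -> : (fun w => \big[Order.max/0%E]_(i < 2) ((uf i)%:E * X w (Kf i)))%E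
     = (fun w => maxe (u%:E * X w A) (v%:E * X w B))%E.
    apply/funext => w; rewrite !big_ord_recl big_ord0 /= /uf /Kf /=.
    by rewrite [X in maxe _ X]max_l // mule_ge0 // lee_fin.
  by [].
have el2 f A B a a' : compact A -> compact B -> A `<=` B -> 0 <= a' -> a' <= a ->
    (forall z, A z -> f z = a) -> (forall z, B z -> ~ A z -> f z = a') ->
    (forall z, ~ B z -> f z = 0) ->
    frechet P (fun w => maxe (a'%:E * X w B) (a%:E * X w A))%E (ell P X f).
  move=> cA cB AB a'0 a'a fA fBA fB.
  have [b fb] := ms2 B A a' a cB cA a'0 (le_trans a'0 a'a).
  suff -> : ell P X f = b by [].
  apply: ell_of fb => w; exact: ext_int_two.
have fr1 A : compact A -> frechet P (fun w => X w A) (theta P X A).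
  move=> cA; have := el2 \1_A A A 1 1 cA cA (@subset_refl _ A) ler01 (lexx _).
  have -> : (fun w => maxe (1%:E * X w A) (1%:E * X w A))%E = (fun w => X w A).
    by apply/funext => w; rewrite maxxx mul1e.
  apply.
  - by move=> z Az; rewrite indicE mem_set.
  - by [].
  - by move=> z nAz; rewrite indicE memNset.
have ellc c A : 0 <= c -> compact A ->
    ell P X (fun z => c * \1_A z) = c * theta P X A.
  move=> c0 cA.
  have h1 := el2 (fun z => c * \1_A z) A A c c cA cA (@subset_refl _ A) c0 (lexx _).
  have h2 := @frechet_scale _ _ _ P _ _ c (fr1 A cA) c0.
  have e : (fun w => maxe (c%:E * X w A) (c%:E * X w A))%E = (fun w => c%:E * X w A)%E.
    by apply/funext => w; rewrite maxxx.
  rewrite e in h1; apply: frechet_unique (h1 _ _ _) h2.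
  - by move=> z Az; rewrite indicE (mem_set Az) /= mulr1.
  - by [].
  - by move=> z nAz; rewrite indicE memNset // mulr0.
pose L := K1 `|` K2.
have cL : compact L by apply: compactU.
have KL : K2 `<=` L by apply: subsetUr.
pose H x y := [set w | (X w L <= x%:E)%E /\ (X w K2 <= y%:E)%E].
have cdf x y : 0 < y -> y <= x -> (measurable (H x y) /\ P (H x y) = (expR (- ((theta P X L - theta P X K2) / x)) *
                 expR (- (theta P X K2 / y)))%:E).
  move=> y0 yx; have x0 : 0 < x := lt_le_trans y0 yx.
  split; first by apply: measurableI; apply: mle.
  pose c1 := x^-1; pose c2 := y^-1 - x^-1.
  have c10 : 0 <= c1 by rewrite invr_ge0 ltW.
  have c20 : 0 <= c2 by rewrite subr_ge0 lef_pV2 ?posrE.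
  pose f := (fun z => c1 * \1_L z) \+ (fun z => c2 * \1_K2 z).
  have hf : ell P X f = c1 * theta P X L + c2 * theta P X K2.
    rewrite /f hadd; last exact: comon_ind.
      by rewrite !ellc.
      exact: USC_ind.
    exact: USC_ind.
  have fr := el2 f K2 L (c1 + c2) c1 cK2 cL KL c10.
  have g1 : c1 <= c1 + c2 by rewrite lerDl.
  have g2 : forall z, K2 z -> f z = c1 + c2.
    by move=> z Kz; rewrite /f /= !indicE (mem_set Kz) (mem_set (KL z Kz)) /= !mulr1.
  have g3 : forall z, L z -> ~ K2 z -> f z = c1.
    by move=> z Lz nKz; rewrite /f /= !indicE (mem_set Lz) memNset //= mulr1 mulr0 addr0.
  have g4 : forall z, ~ L z -> f z = 0.
    move=> z nLz; have nKz : ~ K2 z by move=> /KL.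
    by rewrite /f /= !indicE !memNset //= !mulr0 addr0.
  have [_ e] := (fr g1 g2 g3 g4).2 1 ltr01.
  rewrite hf in e.
  have -> : H x y = [set w | (maxe (c1%:E * X w L) ((c1 + c2)%:E * X w K2) <= 1%:E)%E].
    have -> : c1 + c2 = y^-1 by rewrite /c1 /c2 addrC subrK.
    apply/seteqP; split => w; rewrite /H /=;
      rewrite ge_max (Xfin w L cL) (Xfin w K2 cK2) -!EFinM !lee_fin
        !ler_pdivrMl // !mulr1.
      by move=> [-> ->].
    by move/andP.
  rewrite e -expRD divr1 /c1 /c2; congr (expR _)%:E; ring.
pose tL := theta P X L; pose tK := theta P X K2.
have tK0 : 0 <= tK := (fr1 K2 cK2).1.
have al0 : 0 <= tL - tK.
  pose o : R := 1.
  have o0 : 0 < o by rewrite /o ltr01.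
  have [m1 e1] := (fr1 K2 cK2).2 o o0.
  have [mH eH] := cdf o o o0 (lexx _).
  have sub : H o o `<=` [set w | (X w K2 <= o%:E)%E] by move=> w [].
  have h := Ple _ _ _ P _ _ mH m1 sub.
  move: h; rewrite eH e1 lee_fin -expRD ler_expR /o !divr1 => h.
  rewrite /tL /tK; lra.
have mD A B : compact A -> compact B ->
    measurable [set w | fine (X w A) - fine (X w B) <= eps].
  move=> cA cB.
  have := measurable_funB (mg A cA) (mg B cB) measurableT (measurable_itv `]-oo, eps]).
  rewrite setTI; congr measurable; apply/seteqP; split => w /=; by rewrite in_itv.
pose A := [set w | fine (X w K1) - fine (X w K2) <= eps].
pose A' := [set w | fine (X w L) - fine (X w K2) <= eps].
have mA : measurable A by apply: mD.
have mA' : measurable A' by apply: mD.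
have A'A : A' `<=` A.
  move=> w; rewrite /A /A' /=; have := Xmono w K1 L cK1 cL (@subsetUl _ K1 K2).
  lra.
pose c := expR (- ((tL - tK) / eps)).
pose U := fix U (n : nat) : set Omega := if n is m.+1 then
   U m `|` (H (m.+2%:R * eps) (m.+2%:R * eps) `\` H (m.+2%:R * eps) (m.+1%:R * eps))
   else H eps eps.
have inv n : [/\ measurable (U n), U n `<=` A',
    U n `<=` [set w | (X w K2 <= (n.+1%:R * eps)%:E)%E] &
    ((c * expR (- (tK / (n.+1%:R * eps))))%:E <= P (U n))%E].
  have Pfin S : measurable S -> P S = (fine (P S))%:E.
    move=> mS; rewrite fineK // ge0_fin_numE ?measure_ge0 //.
    exact: le_lt_trans (probability_le1 P mS) (ltry 1).
  elim: n => [|n [mU UA UK IH]].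
    have e1 : 1%:R * eps = eps by rewrite mul1r.
    rewrite e1 /=.
    have [mH eH] := cdf eps eps eps0 (lexx _).
    split => //.
    - move=> w [hL hK]; rewrite /A' /=.
      move: hL; rewrite (Xfin w L cL) lee_fin.
      have := fine_ge0 (X0 w K2); lra.
    - by move=> w [].
    - by rewrite eH.
  pose x := n.+2%:R * eps; pose y := n.+1%:R * eps.
  have y0 : 0 < y by rewrite /y mulr_gt0.
  have xyE : x = y + eps by rewrite /x /y -natr1 mulrDl mul1r.
  have yx : y <= x by rewrite xyE lerDl ltW.
  have epsx : eps <= x.
    by rewrite xyE lerDr ltW.
  have [mxx exx] := cdf x x (lt_le_trans y0 yx) (lexx _).
  have [mxy exy] := cdf x y y0 yx.
  have mB : measurable (H x x `\` H x y) by apply: measurableD.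
  have UnE : U n.+1 = U n `|` (H x x `\` H x y) by [].
  rewrite UnE; split.
  - exact: measurableU.
  - move=> w [/UA //|[[hL hK] nxy]].
    have hK' : ~ (X w K2 <= y%:E)%E by move=> h; apply: nxy.
    move: hL hK'; rewrite /A' /= (Xfin w L cL) (Xfin w K2 cK2) !lee_fin => hL.
    move/negP; rewrite -ltNge => hK'; lra.
  - move=> w [/UK h|[[_ hK] _]] /=.
      by apply: (le_trans h); rewrite lee_fin.
    exact: hK.
  - rewrite PU //; last first.
      apply/seteqP; split => // w [/UK hK [[hL _] nxy]]; apply: nxy; split => //.
    rewrite PD //; last first.
      by move=> w [hL hK]; split => //; apply: (le_trans hK); rewrite lee_fin.
    rewrite exx exy (Pfin _ mU) -EFinB -EFinD lee_fin.
    move: IH; rewrite (Pfin _ mU) lee_fin -/y => IH.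
    set p := fine (P (U n)) in IH *.
    have ha : c <= expR (- ((tL - tK) / x)).
      rewrite /c ler_expR lerN2; apply: ler_wpM2l => //.
      by rewrite lef_pV2 ?posrE // (lt_le_trans eps0).
    have hu : expR (- (tK / y)) <= expR (- (tK / x)).
      rewrite ler_expR lerN2; apply: ler_wpM2l => //.
      by rewrite lef_pV2 ?posrE // (lt_le_trans y0).
    have c0 : 0 <= c by rewrite /c ltW ?expR_gt0.
    rewrite /tL /tK in ha hu IH *.
    rewrite -/x /=. nra.

split; first exact: mA.
have key n : (c * expR (- (tK / (n.+1%:R * eps)))) <= fine (P A).
  have [mU UA _ IH] := inv n.
  have h := le_trans IH (Ple _ _ _ P _ _ mU mA (subset_trans UA A'A)).
  have PAfin : P A = (fine (P A))%:E.
    rewrite fineK // ge0_fin_numE ?measure_ge0 //.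
    exact: le_lt_trans (probability_le1 P mA) (ltry 1).
  by move: h; rewrite PAfin lee_fin.
have PAfin : P A = (fine (P A))%:E.
  rewrite fineK // ge0_fin_numE ?measure_ge0 //.
  exact: le_lt_trans (probability_le1 P mA) (ltry 1).
rewrite -/A PAfin lee_fin.
have -> : eps^-1 * (theta P X (K1 `|` K2) - theta P X K2) = (tL - tK) / eps.
  by rewrite mulrC.
rewrite -/c.
set pA := fine (P A) in key *.
rewrite leNgt; apply/negP => hlt.
have c1 : c <= 1 by rewrite /c expR_le1 oppr_le0 divr_ge0 // ltW.
have cpos : 0 < c by apply: expR_gt0.
pose delta := c - pA.
have dpos : 0 < delta by rewrite /delta subr_gt0.
pose M := tK / (eps * delta).
have M0 : 0 <= M by rewrite /M divr_ge0 // ltW // mulr_gt0.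
pose N := Num.Def.archi_bound M.
have MN : M < N%:R := archi_boundP M0.
pose N1 : R := N.+1%:R.
have NN1 : N%:R <= N1 by rewrite /N1 ler_nat.
have N1pos : 0 < N1 by rewrite /N1 ltr0Sn.
pose t := tK / (N1 * eps).
have t0 : 0 <= t by rewrite /t divr_ge0 // ltW // mulr_gt0.
have tE : t * (N1 * eps) = tK by rewrite /t divfK // gt_eqF // mulr_gt0.
have ME : M * (eps * delta) = tK by rewrite /M divfK // gt_eqF // mulr_gt0.
have ep1 : 0 < N1 * eps by rewrite mulr_gt0.
have ep2 : 0 < eps * delta by rewrite mulr_gt0.
have tlt : t < delta.
  have h1 : tK < N1 * (eps * delta).
    rewrite -ME; rewrite ltr_pM2r //; exact: lt_le_trans MN NN1.
  rewrite -(ltr_pM2r ep1) tE; move: h1; rewrite /N1; nra.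
have := key N; rewrite -/N1 -/t => hk.
have := expR_ge1Dx (- t).
move=> he.
have p1 : c * (1 - t) <= c * expR (- t) by rewrite ler_wpM2l // ?ltW //; lra.
have p2 : c * t <= t by rewrite ler_piMl.
rewrite /delta in tlt; lra.
Qed.

Theorem mainTheorem16 (R : realType) (E : topologicalType)
    (d : measure_display) (Omega : measurableType d)
    (P : probability Omega R) (X : Omega -> set E -> \bar R) :
  LCHS E -> CRSM P X ->
  forall (K1 K2 : set E) (eps : R), compact K1 -> compact K2 -> 0 < eps ->
    ((expR (- (eps^-1 * (theta P X (K1 `|` K2) - theta P X K2))))%R%:E
       <= P [set w | (fine (X w K1) - fine (X w K2) <= eps)%R])%E /\
    (P [set w | (eps < `|fine (X w K1) - fine (X w K2)|)%R]
       <= (eps^-1 * (2 * theta P X (K1 `|` K2) - theta P X K1 - theta P X K2))%R%:E)%E.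
Proof.
move=> hE hC K1 K2 eps cK1 cK2 e0.
have [mA hA] := part1 _ _ _ _ P X hE hC K1 K2 eps cK1 cK2 e0.
have [mB hB] := part1 _ _ _ _ P X hE hC K2 K1 eps cK2 cK1 e0.
rewrite setUC in hB.
split => //.
set A := [set w | fine (X w K1) - fine (X w K2) <= eps] in mA hA *.
set B := [set w | fine (X w K2) - fine (X w K1) <= eps] in mB hB *.
have -> : [set w | eps < `|fine (X w K1) - fine (X w K2)|] = ~` A `|` ~` B.
  apply/seteqP; split => w /=; rewrite /A /B /=.
    rewrite ltr_normr opprB => /orP [h|h]; [left|right] => h'; lra.
  move=> [h|h]; rewrite ltr_normr opprB; apply/orP; [left|right];
    by rewrite ltNge; apply/negP.
apply: le_trans (PU2 _ _ _ P _ _ (measurableC mA) (measurableC mB)) _.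
rewrite (PC _ _ _ P _ mA) (PC _ _ _ P _ mB).
rewrite (Pfin _ _ _ P _ mA) (Pfin _ _ _ P _ mB) in hA hB *.
rewrite lee_fin in hA; rewrite lee_fin in hB.
rewrite -!EFinB -EFinD lee_fin.
set t12 := theta P X (K1 `|` K2) in hA hB *.
set t1 := theta P X K1 in hA hB *.
set t2 := theta P X K2 in hA hB *.
set pA := fine (P A) in hA *.
set pB := fine (P B) in hB *.
set u1 := eps^-1 * (t12 - t2) in hA *.
set u2 := eps^-1 * (t12 - t1) in hB *.
have h1 := expR_ge1Dx (- u1).
have h2 := expR_ge1Dx (- u2).
have -> : eps^-1 * (2 * t12 - t1 - t2) = u1 + u2 by rewrite /u1 /u2; ring.
clearbody u1 u2 pA pB.
lra.
Qed.
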